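(* Let $L,n$ be positive integers and $B=(B_1,\dots,B_L)\in\mathcal M(L,n)$. Then $\rho_N(B)\in\mathrm{MLQ}_0(\mu,n)$ for some partition $\mu$, and $\rho_Q(B)$ is a semistandard Young tableau of shape $\mu'$ with content $(|B_1|,\dots,|B_L|)$.
   Context: $\mathcal M(L,n)$ is the set of tuples $B=(B_1,\dots,B_L)$ of subsets of $[n]$, drawn with rows $1..L$ bottom to top and columns $1..n$ left to right, ball in $(r,j)$ iff $j\in B_r$; tuples whose top rows are empty are identified with the tuple obtained by deleting those rows. For a partition $\mu$ ($\mu'$ its conjugate) with $n\ge\ell(\mu)$, $\mathrm{MLQ}(\mu,n)$ is the set of tuples $(B_1,\dots,B_{\mu_1})$ with $|B_j|=\mu'_j$. Diagrams are in French notation (row 1 at the bottom); semistandard means weakly increasing along rows, strictly increasing up columns; content $(c_1,c_2,\dots)$ counts entries equal to $1,2,\dots$. The column word $\mathrm{cw}(B)$ scans columns left to right, each top to bottom, recording row numbers of balls. Major index: for $M\in\mathrm{MLQ}(\mu,n)$, for $r=\mu_1,\dots,2$, unlabelled balls of row $r$ get label $r$; then balls of row $r$ in decreasing label order (left to right among ties) are each paired with the first unlabelled ball of row $r-1$ weakly to the right, cyclically modulo $n$, which gets the same label; a pairing wraps if the lower ball is strictly left of the upper. $\operatorname{maj}(M)=\sum(\ell(p)-r(p)+1)$ over wrapping pairings ($r(p)$ upper row, $\ell(p)$ label); $\mathrm{MLQ}_0(\mu,n)$ is the set of $M$ with $\operatorname{maj}(M)=0$. Collapsing. $\mathrm{Par}_i(w)$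 writes ''('' for each letter $i+1$ and '')'' for each letter $i$ of $w$, left to right, and iteratively matches a ''('' with a '')'' to its right when adjacent or separated only by matched parentheses. $e_i^\star(B)$ moves every ball of row $i+1$ whose letter in $\mathrm{cw}(B)$ is unmatched in $\mathrm{Par}_i(\mathrm{cw}(B))$ down to row $i$ in the same column. Products act right to left; $e^\star_{[a,b]}=e^\star_ae^\star_{a+1}\cdots e^\star_b$; $\rho_N(B)=e^\star_{[1,L-1]}\cdots e^\star_{[1,1]}(B)$. Let $N^{(k)}$ be the bottom $k$ rows of $e^\star_{[1,k-1]}\cdots e^\star_{[1,1]}(B)$ for $1\le k\le L$, $N^{(0)}$ empty; $\rho_Q(B)$ is the filling (in French notation) whose row $r$ consists of $|N^{(i)}_r|-|N^{(i-1)}_r|$ entries equal to $i$ for each $i=1,\dots,L$ (with $|N^{(i-1)}_i|=0$), written in weakly increasing order. *)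

(* Defs.v *)
From mathcomp Require Import all_boot.
Set Implicit Arguments. Unset Strict Implicit. Unset Printing Implicit Defensive.

(* A ball arrangement B = (B_1,...,B_L) in M(L,n) is a seq {set 'I_n} of size L;
   row r (1-based) is [row B r] = nth set0 B (r-1); column j (1-based) is the
   ordinal j-1. Rows beyond size B are empty (identification of empty top rows). *)

Definition row n (B : seq {set 'I_n}) (r : nat) : {set 'I_n} := nth set0 B r.-1.

(* column word, as the list of (row, column) positions of the letters:
   columns left to right, each column top to bottom; the letter is the row. *)
Definition cw n (B : seq {set 'I_n}) : seq (nat * nat) :=
  flatten [seq [seq (r, nat_of_ord j) | r <- rev (iota 1 (size B)) & j \in row B r]
          | j <- enum 'I_n].

(* Par_i: letters i+1 are "(", letters i are ")"; the unmatched "(" are those left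
   on the stack by the usual left-to-right bracket matching. *)
Definition unmatched_open (i : nat) (w : seq (nat * nat)) : seq (nat * nat) :=
  foldl (fun st p => if p.1 == i.+1 then p :: st
                     else if p.1 == i then behead st else st) [::] w.

Definition estar n (i : nat) (B : seq {set 'I_n}) : seq {set 'I_n} :=
  let U := [set j : 'I_n | (i.+1, nat_of_ord j) \in unmatched_open i (cw B)] in
  set_nth set0 (set_nth set0 B i (row B i.+1 :\: U)) i.-1 (row B i :|: U).

(* e^star_{[1,k]} = e_1 e_2 ... e_k  (e_k applied first) *)
Definition eseg1 n (k : nat) (B : seq {set 'I_n}) : seq {set 'I_n} :=
  foldr (@estar n) B (iota 1 k).

Definition rhoNk n (k : nat) (B : seq {set 'I_n}) : seq {set 'I_n} :=
  foldl (fun B' j => eseg1 j B') B (iota 1 k.-1).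

Definition rhoN n (B : seq {set 'I_n}) : seq {set 'I_n} := rhoNk (size B) B.

(* |N^{(k)}_r| : size of row r of the bottom k rows (0 if r is not among them) *)
Definition Nsz n (B : seq {set 'I_n}) (k r : nat) : nat :=
  if (0 < r <= k) then #|row (rhoNk k B) r| else 0.

(* rho_Q(B) as a list of rows (row 1 first), each weakly increasing *)
Definition rhoQ n (B : seq {set 'I_n}) : seq (seq nat) :=
  [seq flatten [seq nseq (Nsz B i r - Nsz B i.-1 r) i | i <- iota 1 (size B)]
  | r <- iota 1 (size B)].

Definition is_partition (mu : seq nat) : bool :=
  sorted geq mu && all (fun x => 0 < x) mu.

Definition conj_part (mu : seq nat) (j : nat) : nat := count (fun x => j <= x) mu.

Definition rowcols n (M : seq {set 'I_n}) (r : nat) : seq nat :=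
  sort leq [seq nat_of_ord j | j <- enum (row M r)].

(* first available column weakly right of c, cyclically; flag = wrapped *)
Definition pick_cyc (c : nat) (avail : seq nat) : nat * bool :=
  match [seq x <- avail | c <= x] with
  | x :: _ => (x, false)
  | [::] => (head 0 avail, true)
  end.

(* order on labelled balls (column, label): decreasing label, ties left to right *)
Definition lab_ord (p q : nat * nat) : bool :=
  (q.2 < p.2) || ((p.2 == q.2) && (p.1 <= q.1)).

(* pairing of the (fully labelled) row r with row r-1 (columns [below]);
   returns the full labelling of row r-1 (unpaired balls get label r-1)
   and the contribution to maj of the wrapping pairings *)
Definition pair_step (r : nat) (lab : seq (nat * nat)) (below : seq nat)
  : seq (nat * nat) * nat :=
  let: (avail, newlab, m) :=
    foldl (fun st p =>
             let: (av, nl, m) := st in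
             let: (x, w) := pick_cyc p.1 av in
             (rem x av, (x, p.2) :: nl, m + (if w then p.2 - r + 1 else 0)))
          (below, [::], 0) (sort lab_ord lab) in
  (newlab ++ [seq (c, r.-1) | c <- avail], m).

Fixpoint maj_aux n (M : seq {set 'I_n}) (k r : nat) (lab : seq (nat * nat)) : nat :=
  match k with
  | 0 => 0
  | k'.+1 => let: (lab', m) := pair_step r lab (rowcols M r.-1) in
             m + maj_aux M k' r.-1 lab'
  end.

Definition maj n (M : seq {set 'I_n}) : nat :=
  let L := size M in maj_aux M L.-1 L [seq (c, L) | c <- rowcols M L].

(* M in MLQ(mu, n) (up to deleting empty top rows) *)
Definition in_MLQ n (mu : seq nat) (M : seq {set 'I_n}) : Prop :=
  is_partition mu /\ size mu <= n /\
  (forall r, 0 < r -> #|row M r| = conj_part mu r).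

Definition in_MLQ0 n (mu : seq nat) (M : seq {set 'I_n}) : Prop :=
  in_MLQ mu M /\ maj M = 0.

(* T (rows listed bottom to top, French) is a semistandard tableau of shape
   [shape] (row r, 1-based, has length shape r) with content [content] *)
Definition is_ssyt (T : seq (seq nat)) (shape content : nat -> nat) : Prop :=
  (forall r, size (nth [::] T r) = shape r.+1) /\
  (forall r, sorted leq (nth [::] T r)) /\
  (forall r c, c < size (nth [::] T r.+1) ->
     nth 0 (nth [::] T r) c < nth 0 (nth [::] T r.+1) c) /\
  (forall i, count_mem i (flatten T) = content i).

(* Main.v *)
Require Import Defs.
From mathcomp Require Import all_boot zify.
Set Implicit Arguments. Unset Strict Implicit. Unset Printing Implicit Defensive.

Section Stack.
Definition stp (i : nat) (st : seq (nat * nat)) (p : nat * nat) : seq (nat * nat) :=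
  if p.1 == i.+1 then p :: st else if p.1 == i then behead st else st.

Lemma unmatchedE i w : unmatched_open i w = foldl (stp i) [::] w.
Proof. by []. Qed.

Fixpoint ex (i : nat) (w : seq (nat * nat)) : nat :=
  match w with
  | [::] => 0
  | p :: w' => if p.1 == i.+1 then (ex i w').-1 else if p.1 == i then (ex i w').+1 else ex i w'
  end.

Lemma foldl_stp i w st : foldl (stp i) st w = foldl (stp i) [::] w ++ drop (ex i w) st.
Proof.
elim: w st => [|p w IH] st; first by rewrite /= drop0.
rewrite /=.
rewrite IH [in RHS]IH -catA; congr (_ ++ _).
rewrite /stp; case: ifP => _.
  by case: (ex i w) => [|e] /=; rewrite ?drop0.
case: ifP => _ /=; last by [].
by case: st => [|x st] /=; rewrite ?drop_nil //; case: (ex i w) => [|e] /=; rewrite ?drop0.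
Qed.

Lemma mem_foldl_stp i w st x : x \in foldl (stp i) st w -> (x \in st) || (x \in w).
Proof.
elim: w st => [|p w IH] st /=; first by move=> ->.
move/IH; rewrite /stp in_cons.
case: ifP => _; first by rewrite in_cons; case/orP=> [/orP[]|] ->; rewrite ?orbT.
case: ifP => _; last by case/orP => ->; rewrite ?orbT.
by case/orP => [/mem_behead|] ->; rewrite ?orbT.
Qed.

Lemma foldl_stp_ign i st w : all (fun p => (p.1 != i) && (p.1 != i.+1)) w -> foldl (stp i) st w = st.
Proof.
elim: w st => [|p w IH] st //= /andP[/andP[h1 h2] hw].
by rewrite IH // /stp (negbTE h1) (negbTE h2).
Qed.

Lemma ex_cat_ign i u v : all (fun p => (p.1 != i) && (p.1 != i.+1)) u -> ex i (u ++ v) = ex i v.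
Proof.
elim: u => [|p u IH] //= /andP[/andP[h1 h2] hu].
by rewrite (negbTE h1) (negbTE h2) IH.
Qed.
End Stack.

Section Cols.
Variable n : nat.

Definition memn (X : {set 'I_n}) (j : nat) : bool :=
  match (insub j : option 'I_n) with Some k => k \in X | None => false end.

Lemma memn_ord X (k : 'I_n) : memn X k = (k \in X).
Proof. by rewrite /memn valK. Qed.

Lemma memn_ge X j : n <= j -> memn X j = false.
Proof. by move=> h; rewrite /memn insubF // ltnNge h. Qed.

Lemma memnU X Y j : memn (X :|: Y) j = memn X j || memn Y j.
Proof. by rewrite /memn; case: (insub j) => [k|] //; rewrite in_setU. Qed.

Lemma memnD X Y j : memn (X :\: Y) j = memn X j && ~~ memn Y j.
Proof. by rewrite /memn; case: (insub j) => [k|] //; rewrite in_setD andbC. Qed.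

Lemma memn0 j : memn set0 j = false.
Proof. by rewrite /memn; case: (insub j) => [k|] //; rewrite in_set0. Qed.

Definition colwn (B : seq {set 'I_n}) (j : nat) : seq (nat * nat) :=
  [seq (r, j) | r <- rev (iota 1 (size B)) & memn (row B r) j].

Lemma cwE B : cw B = flatten (map (colwn B) (iota 0 n)).
Proof.
rewrite /cw -val_enum_ord -map_comp; congr flatten; apply: eq_map => j /=.
by rewrite /colwn; congr map; apply: eq_filter => r; rewrite memn_ord.
Qed.

Definition Wc B c := flatten (map (colwn B) (iota c (n - c))).

Lemma cw_split B c : c <= n -> cw B = flatten (map (colwn B) (iota 0 c)) ++ Wc B c.
Proof. by move=> h; rewrite cwE /Wc -flatten_cat -map_cat -iotaD subnKC. Qed.

Lemma Wc_S B c : c < n -> Wc B c = colwn B c ++ Wc B c.+1.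
Proof. by move=> h; rewrite /Wc (_ : n - c = (n - c.+1).+1) //; lia. Qed.

Lemma Wc_ge B c : n <= c -> Wc B c = [::].
Proof. by move=> h; rewrite /Wc (_ : n - c = 0) //; lia. Qed.

Lemma mem_colwn B j x : x \in colwn B j -> x.2 = j.
Proof. by case/mapP => r _ ->. Qed.

Lemma mem_Wc B c x : x \in Wc B c -> c <= x.2.
Proof.
case/flattenP => s /mapP [j]; rewrite mem_iota => /andP[h _] -> /mem_colwn ->//.
Qed.

Lemma mem_pre B c x : x \in flatten (map (colwn B) (iota 0 c)) -> x.2 < c.
Proof.
case/flattenP => s /mapP [j]; rewrite mem_iota => /andP[_ h] -> /mem_colwn ->//.
Qed.

Lemma rev_iota_split L i : 0 < i < L ->
  rev (iota 1 L) = rev (iota i.+2 (L - i.+1)) ++ [:: i.+1; i] ++ rev (iota 1 i.-1).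
Proof.
move=> /andP[h1 h2].
have e : L = i.-1 + (2 + (L - i.+1)) by lia.
rewrite {1}e iotaD (iotaD _ 2) !rev_cat (_ : 1 + i.-1 = i); last by lia.
rewrite (_ : i + 2 = i.+2); last by lia.
rewrite -catA; congr (_ ++ _).
Qed.

Lemma colwn_split B i j : 0 < i < size B ->
  colwn B j = [seq (r, j) | r <- rev (iota i.+2 (size B - i.+1)) & memn (row B r) j]
   ++ [seq (r, j) | r <- [:: i.+1; i] & memn (row B r) j]
   ++ [seq (r, j) | r <- rev (iota 1 i.-1) & memn (row B r) j].
Proof. by move=> h; rewrite /colwn (rev_iota_split h) !filter_cat !map_cat. Qed.

Lemma ign_hi B i j : all (fun p => (p.1 != i) && (p.1 != i.+1))
   [seq (r, j) | r <- rev (iota i.+2 (size B - i.+1)) & memn (row B r) j].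
Proof.
apply/allP => x /mapP [r]; rewrite mem_filter mem_rev mem_iota => /andP[_ /andP[h _]] -> /=.
apply/andP; split; apply/eqP; lia.
Qed.

Lemma ign_lo B i j : all (fun p => (p.1 != i) && (p.1 != i.+1))
   [seq (r, j) | r <- rev (iota 1 i.-1) & memn (row B r) j].
Proof.
apply/allP => x /mapP [r]; rewrite mem_filter mem_rev mem_iota => /andP[_ /andP[h h']] -> /=.
apply/andP; split; apply/eqP; lia.
Qed.

Lemma foldl_colwn B i j st : 0 < i < size B ->
  foldl (stp i) st (colwn B j) =
  (let st1 := if memn (row B i.+1) j then (i.+1, j) :: st else st in
   if memn (row B i) j then behead st1 else st1).
Proof.
move=> h; rewrite (colwn_split j h) !foldl_cat (foldl_stp_ign st (ign_hi B i j)) (foldl_stp_ign _ (ign_lo B i j)).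
have e1 : (i == i.+1) = false by rewrite ltn_eqF.
rewrite /=; case: (memn (row B i.+1) j); case: (memn (row B i) j);
  rewrite /= /stp /= ?eqxx ?e1 //.
Qed.

Lemma ex_colwn B i j v : 0 < i < size B ->
  ex i (colwn B j ++ v) =
  (let e1 := if memn (row B i) j then (ex i v).+1 else ex i v in
   if memn (row B i.+1) j then e1.-1 else e1).
Proof.
move=> h; rewrite (colwn_split j h) -!catA (ex_cat_ign _ (ign_hi B i j)).
have e1 : (i == i.+1) = false by rewrite ltn_eqF.
rewrite /=; case: (memn (row B i.+1) j); case: (memn (row B i) j);
  rewrite /= ?eqxx ?e1 (ex_cat_ign _ (ign_lo B i j)) //.
Qed.

End Cols.

Section Estep.
Variable n : nat.
Implicit Types (B : seq {set 'I_n}).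

Definition Uset B i : {set 'I_n} :=
  [set j : 'I_n | (i.+1, nat_of_ord j) \in unmatched_open i (cw B)].

Lemma memU B i c : 0 < i < size B -> c < n ->
  memn (Uset B i) c = [&& memn (row B i.+1) c, ~~ memn (row B i) c & ex i (Wc B c.+1) == 0].
Proof.
move=> hi hc.
have -> : memn (Uset B i) c = ((i.+1, c) \in unmatched_open i (cw B)).
  by rewrite (_ : c = Ordinal hc) // memn_ord inE.
rewrite unmatchedE (cw_split B (ltnW hc)) (Wc_S B hc) foldl_cat foldl_cat.
rewrite foldl_stp (foldl_colwn _ _ hi) mem_cat.
have h1 : (i.+1, c) \in foldl (stp i) [::] (Wc B c.+1) = false.
  by apply/negP => /mem_foldl_stp /= /mem_Wc /=; lia.
have h2 : (i.+1, c) \in foldl (stp i) [::] (flatten (map (colwn B) (iota 0 c))) = false.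
  by apply/negP => /mem_foldl_stp /= /mem_pre /=; lia.
rewrite h1 /=.
move: h2; set gP := foldl _ [::] (flatten _) => h2.
case: (memn (row B i.+1) c); case: (memn (row B i) c) => /=.
- by apply/negP => /mem_drop; rewrite h2.
- case: (ex i (Wc B c.+1)) => [|e] /=; first by rewrite inE eqxx.
  by apply/negP => /mem_drop; rewrite h2.
- by apply/negP => /mem_drop /mem_behead; rewrite h2.
- by apply/negP => /mem_drop; rewrite h2.
Qed.

Definition cnt (X : {set 'I_n}) c := \sum_(c <= j < n) memn X j.

Lemma cntS X c : c < n -> cnt X c = memn X c + cnt X c.+1.
Proof. by move=> h; rewrite /cnt big_ltn. Qed.

Lemma cnt_ge X c : n <= c -> cnt X c = 0.
Proof. by move=> h; rewrite /cnt big_geq. Qed.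

Lemma cnt0 X : cnt X 0 = #|X|.
Proof.
rewrite /cnt big_mkord -sum1_card [in RHS]big_mkcond /=; apply: eq_bigr => j _.
by rewrite memn_ord; case: (j \in X).
Qed.

Lemma cnt_S_le X c : cnt X c.+1 <= cnt X c.
Proof. by case: (ltnP c n) => h; [rewrite (cntS X h) leq_addl | rewrite !cnt_ge //; lia]. Qed.

Lemma cnt_mono X c c' : c <= c' -> cnt X c' <= cnt X c.
Proof.
move=> /subnK <-; elim: (c' - c) => [|d IH] //.
by apply: leq_trans IH; rewrite addSn cnt_S_le.
Qed.

Lemma cnt_ext X Y c : (forall j, memn X j = memn Y j) -> cnt X c = cnt Y c.
Proof. by move=> h; apply: eq_bigr => j _; rewrite h. Qed.

Lemma cnt_inv B i c : 0 < i < size B ->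
  cnt (Uset B i) c + cnt (row B i) c = cnt (row B i.+1) c + ex i (Wc B c).
Proof.
move=> hi.
move: (erefl (n - c)); move: {-1}(n - c) => d.
elim: d c => [|d IH] c e.
  by rewrite !cnt_ge ?Wc_ge //; lia.
have hc : c < n by lia.
have e' : n - c.+1 = d by lia.
move: (IH _ e').
rewrite (cntS _ hc) (cntS (row B i) hc) (cntS (row B i.+1) hc) (Wc_S B hc) ex_colwn // memU //.
case: (memn (row B i.+1) c); case: (memn (row B i) c); case: (ex i (Wc B c.+1)) => [|x] /=; lia.
Qed.

Lemma cnt_lb B i c : 0 < i < size B ->
  cnt (row B i.+1) c <= cnt (Uset B i) c + cnt (row B i) c.
Proof. by move=> hi; rewrite cnt_inv // leq_addr. Qed.

Lemma cnt_ub B i c : 0 < i < size B ->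
  exists c', c <= c' /\ cnt (Uset B i) c + cnt (row B i) c' <= cnt (row B i.+1) c'.
Proof.
move=> hi.
move: (erefl (n - c)); move: {-1}(n - c) => d.
elim: d c => [|d IH] c e.
  by exists c; rewrite !cnt_ge //; lia.
have hc : c < n by lia.
have e' : n - c.+1 = d by lia.
case hU: (memn (Uset B i) c).
  exists c; split => //.
  move: hU; rewrite memU // => /and3P[hT hA /eqP hE].
  rewrite cnt_inv // (Wc_S B hc) ex_colwn // hT (negbTE hA) hE /=; lia.
have [c' [h1 h2]] := IH _ e'.
exists c'; split; first by lia.
by rewrite (cntS _ hc) hU.
Qed.

Lemma memU_sub B i j : 0 < i < size B -> memn (Uset B i) j ->
  memn (row B i.+1) j && ~~ memn (row B i) j.
Proof.
move=> hi; case: (ltnP j n) => hj; last by rewrite memn_ge.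
by rewrite memU // => /and3P[-> -> _].
Qed.

Lemma estep B i : 0 < i < size B ->
  size (estar i B) = size B /\
  (forall r, 0 < r -> r != i -> r != i.+1 -> row (estar i B) r = row B r) /\
  exists M : nat -> nat,
   [/\ (forall c c', c <= c' -> M c' <= M c),
    (forall c, cnt (row (estar i B) i) c = cnt (row B i) c + M c),
    (forall c, cnt (row (estar i B) i.+1) c + M c = cnt (row B i.+1) c),
    (forall c, cnt (row B i.+1) c <= M c + cnt (row B i) c) &
    (forall c, exists c', c <= c' /\ M c + cnt (row B i) c' <= cnt (row B i.+1) c')].
Proof.
move=> hi; have /andP[h0 hs] := hi.
have rowE r : row (estar i B) r =
   if r.-1 == i.-1 then row B i :|: Uset B i
   else if r.-1 == i then row B i.+1 :\: Uset B i else row B r.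
  by rewrite {1}/row /estar nth_set_nth /= nth_set_nth.
split.
  rewrite /estar !size_set_nth; apply/eqP; rewrite eqn_leq; apply/andP; split; lia.
split.
  move=> r hr h1 h2; rewrite rowE.
  have -> : (r.-1 == i.-1) = false by apply/eqP; lia.
  by have -> : (r.-1 == i) = false by apply/eqP; lia.
exists (cnt (Uset B i)); split.
- by move=> c c'; apply: cnt_mono.
- move=> c; rewrite rowE eqxx /cnt -big_split /=; apply: eq_bigr => j _.
  rewrite memnU; have := memU_sub hi (j:=j).
  by case: (memn (Uset B i) j); case: (memn (row B i) j); case: (memn (row B i.+1) j) => //= /(_ isT).
- move=> c; rewrite rowE (_ : (i.+1.-1 == i.-1) = false) /=; last by apply/eqP; lia.
  rewrite eqxx /cnt -big_split /=; apply: eq_bigr => j _.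
  rewrite memnD; have := memU_sub hi (j:=j).
  by case: (memn (Uset B i) j); case: (memn (row B i) j); case: (memn (row B i.+1) j) => //= /(_ isT).
- by move=> c; apply: cnt_lb.
- by move=> c; apply: cnt_ub.
Qed.

End Estep.

Definition chain n (Y : seq {set 'I_n}) k :=
  forall r c, 0 < r < k -> cnt (row Y r.+1) c <= cnt (row Y r) c.

Definition Qd n (X Y : seq {set 'I_n}) k j :=
  size Y = size X /\
  (forall r, 0 < r < j -> row Y r = row X r) /\
  (forall r, k.+1 < r -> row Y r = row X r) /\
  (exists D : nat -> nat, (forall c c', c <= c' -> D c' <= D c) /\
      forall c, cnt (row Y j) c = cnt (row X j) c + D c) /\
  (forall r c, j < r <= k.+1 -> cnt (row Y r) c <= cnt (row X r.-1) c) /\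
  (forall r c, j < r <= k -> cnt (row X r) c <= cnt (row Y r) c) /\
  (forall r c, j < r < k.+1 -> cnt (row Y r.+1) c <= cnt (row Y r) c).

Lemma desc n (X : seq {set 'I_n}) k : 0 < k < size X -> chain X k ->
  forall d, d < k -> Qd X (foldr (@estar n) X (iota (k - d) d.+1)) k (k - d).
Proof.
move=> hk hch; elim=> [|d IH] hd.
  rewrite subn0 /=.
  have [hsz [hrow [M [hM1 hM2 hM3 hM4 hM5]]]] := estep hk.
  split => //; split.
    by move=> r hr; apply: hrow; apply/eqP; lia.
  split; first by move=> r hr; apply: hrow; apply/eqP; lia.
  split; first by exists M.
  split.
    move=> r c hr; have -> : r = k.+1 by lia.
    by have := hM3 c; have := hM4 c; rewrite /=; lia.
  by split => r c hr; lia.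
have {IH} := IH (ltnW hd).
have -> : k - d = (k - d.+1).+1 by lia.
set j := k - d.+1.
have hj : 0 < j < k by lia.
rewrite (_ : foldr (@estar n) X (iota j d.+2) = estar j (foldr (@estar n) X (iota j.+1 d.+1))) //.
set Y := foldr _ _ _.
move=> [hsz [hrow [hrow' [[D [hD1 hD2]] [h5 [h6 h7]]]]]].
have hjY : 0 < j < size Y by rewrite hsz; lia.
have [hsz' [hr [M [hM1 hM2 hM3 hM4 hM5]]]] := estep hjY.
have eYj : row Y j = row X j by apply: hrow; lia.
have MD c : M c <= D c.
  have [c' [hc1 hc2]] := hM5 c.
  have := hch j c' hj; rewrite -eYj in hc2 *.
  have := hD1 _ _ hc1; have := hD2 c'; lia.
have h6j c : cnt (row X j.+1) c <= cnt (row (estar j Y) j.+1) c.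
  by have := hM3 c; have := hD2 c; have := MD c; lia.
have hrH r : j.+1 < r -> row (estar j Y) r = row Y r.
  by move=> h; apply: hr; try apply/eqP; lia.
have hrL r : 0 < r < j -> row (estar j Y) r = row Y r.
  by move=> h; apply: hr; try apply/eqP; lia.
split; first by rewrite hsz'.
split.
  by move=> r hr0; rewrite hrL // hrow //; lia.
split.
  by move=> r hr0; rewrite hrH ?hrow' //; lia.
split.
  exists M; split => // c; by rewrite hM2 eYj.
split.
  move=> r c hr0; case: (eqVneq r j.+1) => [->|hne].
    by have := hM3 c; have := hM4 c; rewrite eYj /=; lia.
  by rewrite hrH; [apply: h5|]; lia.
split.
  move=> r c hr0; case: (eqVneq r j.+1) => [->|hne]; first exact: h6j.
  by rewrite hrH; [apply: h6|]; lia.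
move=> r c hr0; case: (eqVneq r j.+1) => [->|hne].
  rewrite hrH //; apply: leq_trans (h6j c); apply: h5; lia.
rewrite hrH; last by lia.
rewrite hrH; last by lia.
apply: h7; lia.
Qed.

Definition Pst n (B Y : seq {set 'I_n}) k :=
  size Y = size B /\ (forall r, k < r -> row Y r = row B r) /\ chain Y k.

Lemma stage n (B X : seq {set 'I_n}) k : 0 < k < size B -> Pst B X k ->
  Pst B (eseg1 k X) k.+1 /\
  (forall r c, 0 < r <= k -> cnt (row X r) c <= cnt (row (eseg1 k X) r) c) /\
  (forall r c, 0 < r <= k -> cnt (row (eseg1 k X) r.+1) c <= cnt (row X r) c).
Proof.
move=> hk [hsz [hrows hch]].
have hkX : 0 < k < size X by rewrite hsz.
have hd : k.-1 < k by lia.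
have := desc hkX hch hd.
rewrite (_ : k - k.-1 = 1); last by lia.
rewrite (_ : k.-1.+1 = k); last by lia.
rewrite /eseg1; set Y := foldr _ _ _.
move=> [hsz' [_ [hrow' [[D [hD1 hD2]] [h5 [h6 h7]]]]]].
split.
  split; first by rewrite hsz'.
  split.
    by move=> r hr; rewrite hrow' ?hrows //; lia.
  move=> r c hr; case: (eqVneq r 1) => [->|hne].
    apply: leq_trans (h5 2 c _) _; first by lia.
    by rewrite hD2 /= leq_addr.
  by apply: h7; lia.
split.
  move=> r c hr; case: (eqVneq r 1) => [->|hne].
    by rewrite hD2 leq_addr.
  by apply: h6; lia.
by move=> r c hr; apply: h5; lia.
Qed.

Lemma rhoNkS n k (B : seq {set 'I_n}) : 0 < k -> rhoNk k.+1 B = eseg1 k (rhoNk k B).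
Proof.
move=> hk; rewrite /rhoNk /=.
have e : iota 1 k = iota 1 k.-1 ++ [:: k].
  by rewrite -{1}(prednK hk) -[k.-1.+1]addn1 iotaD add1n prednK.
by rewrite e foldl_cat.
Qed.

Lemma rhoNk1 n (B : seq {set 'I_n}) : rhoNk 1 B = B.
Proof. by []. Qed.

Lemma rhoNk_P n (B : seq {set 'I_n}) k : 0 < k <= size B -> Pst B (rhoNk k B) k.
Proof.
elim: k => [|k IH] // hk.
case: (eqVneq k 0) => [->|hk0].
  rewrite rhoNk1; split => //; split => // r c; lia.
rewrite rhoNkS; last by lia.
by case: (stage (X := rhoNk k B) (k:=k) _ (IH _)) => //; lia.
Qed.

Lemma rhoNk_rel n (B : seq {set 'I_n}) k : 0 < k < size B ->
  (forall r c, 0 < r <= k -> cnt (row (rhoNk k B) r) c <= cnt (row (rhoNk k.+1 B) r) c) /\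
  (forall r c, 0 < r <= k -> cnt (row (rhoNk k.+1 B) r.+1) c <= cnt (row (rhoNk k B) r) c).
Proof.
move=> hk; rewrite rhoNkS; last by lia.
have hP : Pst B (rhoNk k B) k by apply: rhoNk_P; lia.
by case: (stage hk hP) => _ [h1 h2]; split.
Qed.

Definition tot n (Y : seq {set 'I_n}) m := \sum_(1 <= r < m.+1) #|row Y r|.

Lemma tot_split n (Y : seq {set 'I_n}) m i : 0 < i < m ->
  tot Y m = \sum_(1 <= r < i) #|row Y r| + #|row Y i| + #|row Y i.+1| + \sum_(i.+2 <= r < m.+1) #|row Y r|.
Proof.
move=> h; rewrite /tot (big_cat_nat _ (n:=i)); try lia.
rewrite (big_ltn (m:=i)); last by lia.
rewrite (big_ltn (m:=i.+1)); last by lia.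
by rewrite /= !addnA.
Qed.

Lemma estar_tot n (B : seq {set 'I_n}) i : 0 < i < size B ->
  size (estar i B) = size B /\ tot (estar i B) (size B) = tot B (size B).
Proof.
move=> hi; have [hsz [hrow [M [_ hM2 hM3 _ _]]]] := estep hi.
split => //.
rewrite !(tot_split _ hi).
have := hM2 0; have := hM3 0; rewrite !cnt0 => e1 e2.
have E1 : \sum_(1 <= r < i) #|row (estar i B) r| = \sum_(1 <= r < i) #|row B r|.
  apply: eq_big_nat => r hr; rewrite hrow //; try apply/eqP; lia.
have E2 : \sum_(i.+2 <= r < (size B).+1) #|row (estar i B) r| = \sum_(i.+2 <= r < (size B).+1) #|row B r|.
  apply: eq_big_nat => r hr; rewrite hrow //; try apply/eqP; lia.
rewrite E1 E2; lia.
Qed.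

Lemma eseg_tot n (X : seq {set 'I_n}) k : k < size X ->
  size (eseg1 k X) = size X /\ tot (eseg1 k X) (size X) = tot X (size X).
Proof.
move=> hk; rewrite /eseg1.
have : all (fun j => 0 < j < size X) (iota 1 k).
  by apply/allP => j; rewrite mem_iota; lia.
elim: (iota 1 k) => [|j s IH] //= /andP[hj hs].
have [e1 e2] := IH hs.
have hj' : 0 < j < size (foldr (estar (n:=n)) X s) by rewrite e1.
have [f1 f2] := estar_tot hj'.
by rewrite f1 e1; split => //; rewrite -e1 f2 e1.
Qed.

Lemma rhoNk_tot n (B : seq {set 'I_n}) k : k <= size B ->
  size (rhoNk k B) = size B /\ tot (rhoNk k B) (size B) = tot B (size B).
Proof.
elim: k => [|k IH] hk; first by [].
case: (eqVneq k 0) => [->|hk0]; first by [].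
rewrite rhoNkS; last by lia.
have [e1 e2] := IH (ltnW hk).
have hk' : k < size (rhoNk k B) by rewrite e1.
have [f1 f2] := eseg_tot hk'.
by rewrite f1 e1; split => //; rewrite -e1 f2 e1.
Qed.

Lemma rhoNk_partial n (B : seq {set 'I_n}) i : 0 < i <= size B ->
  \sum_(1 <= r < i.+1) #|row (rhoNk i B) r| = \sum_(1 <= r < i.+1) #|row B r|.
Proof.
move=> hi; have hi2 : i <= size B by lia.
have [_ e] := rhoNk_tot hi2.
have [_ [hrow _]] := rhoNk_P hi.
have sp (Y : seq {set 'I_n}) : \sum_(1 <= r < (size B).+1) #|row Y r| =
   \sum_(1 <= r < i.+1) #|row Y r| + \sum_(i.+1 <= r < (size B).+1) #|row Y r|.
  by rewrite (big_cat_nat _ (n:=i.+1)) //; lia.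
move: e; rewrite /tot !sp.
have E : \sum_(i.+1 <= r < (size B).+1) #|row (rhoNk i B) r| =
         \sum_(i.+1 <= r < (size B).+1) #|row B r|.
  by apply: eq_big_nat => r hr; rewrite hrow //; lia.
by rewrite E => /eqP; rewrite eqn_add2r => /eqP.
Qed.

Lemma count_rowcols n (M : seq {set 'I_n}) r c :
  count (fun x => c <= x) (rowcols M r) = cnt (row M r) c.
Proof.
rewrite /rowcols count_sort count_map -sum1_count big_enum_cond /cnt.
rewrite big_geq_mkord big_mkcond [RHS]big_mkcond /=.
apply: eq_bigr => j _; rewrite memn_ord /=.
by case: (j \in row M r); case: (c <= j).
Qed.

Definition Fst (r : nat) := fun (st : seq nat * seq (nat * nat) * nat) (p : nat * nat) =>
  let: (av, nl, m) := st in
  let: (x, w) := pick_cyc p.1 av in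
  (rem x av, (x, p.2) :: nl, m + (if w then p.2 - r + 1 else 0)).

Lemma pair_stepE r lab below : pair_step r lab below =
  let: (avail, newlab, m) := foldl (Fst r) (below, [::], 0) (sort lab_ord lab) in
  (newlab ++ [seq (c, r.-1) | c <- avail], m).
Proof. by []. Qed.

Lemma fold_Fst r P : forall av nl m, sorted leq av ->
  (forall c, count (fun x => c <= x) (map fst P) <= count (fun x => c <= x) av) ->
  (foldl (Fst r) (av, nl, m) P).2 = m /\
  perm_eq (map fst (foldl (Fst r) (av, nl, m) P).1.2 ++ (foldl (Fst r) (av, nl, m) P).1.1)
          (map fst nl ++ av).
Proof.
elim: P => [|p P IH] av nl m hs hH /=; first by [].
have h1 := hH p.1; rewrite /= leqnn add1n in h1.
case E: [seq y <- av | p.1 <= y] => [|x s].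
  have : 0 < size [seq y <- av | p.1 <= y] by rewrite size_filter; exact: leq_ltn_trans (leq0n _) h1.
  by rewrite E.
have hx : x \in [seq y <- av | p.1 <= y] by rewrite E inE eqxx.
rewrite mem_filter in hx; case/andP: hx => hpx hxav.
have hmin y : y \in av -> p.1 <= y -> x <= y.
  move=> hy hpy.
  have : y \in x :: s by rewrite -E mem_filter hpy hy.
  rewrite inE => /orP[/eqP -> //|hys].
  have : sorted leq (x :: s) by rewrite -E; apply: sorted_filter => //; exact: leq_trans.
  move/(order_path_min leq_trans)/allP => /(_ y hys) //.
have Hcnt c : count (fun y => c <= y) av = (c <= x) + count (fun y => c <= y) (rem x av).
  by rewrite (permP (perm_to_rem hxav)) /=.
have -> : pick_cyc p.1 av = (x, false) by rewrite /pick_cyc E.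
rewrite /= addn0.
have hs' : sorted leq (rem x av) by apply: (subseq_sorted leq_trans (rem_subseq x av)).
have hH' c : count (fun y => c <= y) (map fst P) <= count (fun y => c <= y) (rem x av).
  have := hH c; rewrite /= Hcnt.
  case: (leqP c p.1) => hc.
    by rewrite (leq_trans hc hpx) /= !add1n ltnS.
  case: (leqP c x) => hcx; last by move=> h; exact: h.
  move=> _.
  have e : count (fun y => c <= y) av = count (fun y => p.1 <= y) av.
    apply: eq_in_count => y hy /=.
    apply/idP/idP => h; first by apply: leq_trans h; apply: ltnW.
    by apply: leq_trans hcx (hmin y hy h).
  have := hH p.1; rewrite /= leqnn add1n -e Hcnt hcx add1n ltnS => h2.
  apply: (leq_trans _ h2); apply: sub_count => y /= hy; apply: leq_trans hy; exact: ltnW.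
have [IH1 IH2] := IH (rem x av) ((x, p.2) :: nl) m hs' hH'.
split => //.
apply: perm_trans IH2 _ => /=.
rewrite -cat1s perm_catCA perm_cat2l.
by rewrite perm_sym; apply: perm_to_rem.
Qed.

Lemma maj_aux0 n (M : seq {set 'I_n}) k : forall r lab, k < r ->
  (forall r' c, 1 < r' <= r -> cnt (row M r') c <= cnt (row M r'.-1) c) ->
  perm_eq (map fst lab) (rowcols M r) -> maj_aux M k r lab = 0.
Proof.
elim: k => [|k IH] r lab hk hH hp //=.
rewrite pair_stepE.
have hs : sorted leq (rowcols M r.-1) by apply: sort_sorted; exact: leq_total.
have hH' c : count (fun x => c <= x) (map fst (sort lab_ord lab)) <=
             count (fun x => c <= x) (rowcols M r.-1).
  rewrite !count_map count_sort -count_map (permP hp) !count_rowcols.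
  by apply: hH; lia.
have [h1 h2] := @fold_Fst r (sort lab_ord lab) (rowcols M r.-1) [::] 0 hs hH'.
case: (foldl _ _ _) h1 h2 => [[av nl] m] /= -> h2.
rewrite add0n; apply: IH; first by lia.
  by move=> r' c hr'; apply: hH; lia.
by rewrite map_cat -map_comp /= map_id.
Qed.

Lemma maj0 n (M : seq {set 'I_n}) :
  (forall r c, 1 < r -> cnt (row M r) c <= cnt (row M r.-1) c) -> maj M = 0.
Proof.
move=> hH; rewrite /maj.
case: (size M) => [|L] //=.
apply: maj_aux0; first by lia.
  by move=> r' c hr'; apply: hH; lia.
by rewrite -map_comp map_id.
Qed.

Definition blk (a : nat -> nat) m := flatten [seq nseq (a i - a i.-1) i | i <- iota 1 m].

Lemma blkS a m : blk a m.+1 = blk a m ++ nseq (a m.+1 - a m) m.+1.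
Proof. by rewrite /blk -[m.+1]addn1 iotaD map_cat flatten_cat /= cats0 add1n add0n addn1. Qed.

Lemma size_blk a m : (forall i, i < m -> a i <= a i.+1) -> a 0 = 0 -> size (blk a m) = a m.
Proof.
move=> ha h0; elim: m ha => [|m IH] ha //.
rewrite blkS size_cat size_nseq IH; last by move=> i hi; apply: ha; lia.
by have := ha m (ltnSn m); lia.
Qed.

Lemma count_blk a m v : (forall i, i < m -> a i <= a i.+1) -> a 0 = 0 ->
  count (fun x => x <= v) (blk a m) = a (minn v m).
Proof.
move=> ha h0; elim: m ha => [|m IH] ha; first by rewrite minn0.
rewrite blkS count_cat count_nseq IH; last by move=> i hi; apply: ha; lia.
have := ha m (ltnSn m).
case: (leqP m.+1 v) => hv /=.
  by rewrite (_ : minn v m = m) ?(_ : minn v m.+1 = m.+1); lia.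
by rewrite (_ : minn v m = v) ?(_ : minn v m.+1 = v); lia.
Qed.

Lemma count_mem_blk a m i : count_mem i (blk a m) = if 0 < i <= m then a i - a i.-1 else 0.
Proof.
elim: m => [|m IH]; first by rewrite /=; case: i => [|[]].
rewrite blkS count_cat count_nseq IH /=.
case: (eqVneq m.+1 i) => [<-|hne] /=.
  by rewrite leqnn (_ : (m.+1 <= m) = false) ?andbF //=; lia.
case: ifP; case: ifP => //; lia.
Qed.

Lemma mem_blk a m x : x \in blk a m -> 0 < x <= m.
Proof.
by case/flattenP => s /mapP [i]; rewrite mem_iota => hi -> /nseqP [-> _]; lia.
Qed.

Lemma sorted_nseq k v : sorted leq (nseq k v).
Proof. by case: k => // k; elim: k => //= k IH; rewrite leqnn. Qed.

Lemma sorted_cat_nat (s t : seq nat) : sorted leq s -> sorted leq t ->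
  (forall x y, x \in s -> y \in t -> x <= y) -> sorted leq (s ++ t).
Proof.
case: s => [|x s] //= hs ht hxy; rewrite cat_path hs /=.
case: t ht hxy => [|y t] //= ht hxy; rewrite ht andbT.
by apply: hxy; [exact: mem_last | exact: mem_head].
Qed.

Lemma sorted_blk a m : sorted leq (blk a m).
Proof.
elim: m => [|m IH] //; rewrite blkS; apply: sorted_cat_nat => //; first exact: sorted_nseq.
by move=> x y /mem_blk hx /nseqP [-> _]; lia.
Qed.

Lemma nth_sorted_le (s : seq nat) c v : sorted leq s -> c < size s ->
  (nth 0 s c <= v) = (c < count (fun x => x <= v) s).
Proof.
elim: s c => [|x s IH] c //= hs hc.
have hall : all (fun y => x <= y) s by apply: (order_path_min leq_trans).
have hz : v < x -> count (fun y => y <= v) s = 0.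
  move=> hvx; apply/eqP; rewrite -leqn0 leqNgt -has_count; apply/hasP => -[y hy hyv].
  by move/allP: hall => /(_ y hy); lia.
case: c hc => [|c] hc /=.
  by case: (leqP x v) => h //=; rewrite add0n hz.
case: (leqP x v) => h /=.
  by rewrite IH ?add1n ?ltnS //; apply: path_sorted hs.
rewrite add0n hz //.
apply/negbTE; rewrite -ltnNge.
move: hc; rewrite ltnS => hc; have := mem_nth 0 hc.
by move/allP: hall => H /H /= hn; lia.
Qed.

Lemma count_iota_le x m : x <= m -> count (fun j => j <= x) (iota 1 m) = x.
Proof.
move=> h; rewrite -(subnKC h) iotaD count_cat.
have -> : count (fun j => j <= x) (iota 1 x) = x.
  rewrite -[RHS](size_iota 1 x) -count_predT; apply: eq_in_count => j.
  by rewrite mem_iota /=; lia.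
have -> : count (fun j => j <= x) (iota (1 + x) (m - x)) = 0.
  apply/eqP; rewrite -leqn0 leqNgt -has_count; apply/hasP => -[j].
  by rewrite mem_iota /=; lia.
by rewrite addn0.
Qed.

Section Conj.
Variables (f : nat -> nat) (L : nat).
Hypothesis hdec : forall r, 0 < r -> f r.+1 <= f r.
Hypothesis h0 : forall r, L < r -> f r = 0.
Definition mu_of := [seq count (fun r' => j <= f r') (iota 1 L) | j <- iota 1 (f 1)].

Lemma anti r1 r2 : 0 < r1 <= r2 -> f r2 <= f r1.
Proof.
move=> /andP[h1 h2]; rewrite -(subnKC h2); elim: (r2 - r1) => [|d IH]; first by rewrite addn0.
by apply: leq_trans IH; rewrite addnS hdec //; lia.
Qed.

Lemma conj_mu r : 0 < r -> conj_part mu_of r = f r.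
Proof.
move=> hr; rewrite /conj_part /mu_of count_map.
rewrite -[RHS](count_iota_le (m := f 1)); last by apply: anti; lia.
apply: eq_in_count => j; rewrite mem_iota => hj /=.
case: (leqP j (f r)) => hjr.
  have hrL : r <= L by case: (leqP r L) => // /h0; lia.
  rewrite -(subnKC hrL) iotaD count_cat.
  have -> : count (fun r' => j <= f r') (iota 1 r) = r.
    rewrite -[RHS](size_iota 1 r) -count_predT; apply: eq_in_count => r'.
    rewrite mem_iota /= => hr'; apply: leq_trans hjr _; apply: anti; lia.
  by rewrite leq_addr.
apply/negbTE; rewrite -ltnNge.
case: (leqP L r.-1) => hL.
  by apply: leq_ltn_trans (count_size _ _) _; rewrite size_iota; lia.
have e : L = r.-1 + (L - r.-1) by lia.
rewrite {1}e iotaD count_cat.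
have -> : count (fun r' => j <= f r') (iota (1 + r.-1) (L - r.-1)) = 0.
  apply/eqP; rewrite -leqn0 leqNgt -has_count; apply/hasP => -[r'].
  rewrite mem_iota /= => hr' hjr'.
  have : f r' <= f r by apply: anti; lia.
  lia.
by rewrite addn0; apply: leq_ltn_trans (count_size _ _) _; rewrite size_iota; lia.
Qed.

Lemma mu_partition : is_partition mu_of.
Proof.
apply/andP; split.
  rewrite /mu_of sorted_map; apply: (sub_sorted _ (iota_ltn_sorted 1 (f 1))) => x y hxy /=.
  by apply: sub_count => r' /= h; lia.
apply/allP => x /mapP [j]; rewrite mem_iota => hj ->; rewrite -has_count.
case: (leqP 1 L) => hL; last by move: (h0 hL); lia.
by apply/hasP; exists 1; rewrite ?mem_iota /=; lia.
Qed.

Lemma size_mu : size mu_of = f 1.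
Proof. by rewrite size_map size_iota. Qed.
End Conj.

Lemma cnt_set0 n c : cnt (set0 : {set 'I_n}) c = 0.
Proof. by rewrite /cnt big1 // => j _; rewrite memn0. Qed.

Unset Implicit Arguments.
Theorem proposition4p8 (L n : nat) (B : seq {set 'I_n}) :
  0 < L -> 0 < n -> size B = L ->
  exists mu : seq nat,
    in_MLQ0 mu (rhoN B) /\
    (forall i r, 0 < i <= L -> Nsz B i.-1 r <= Nsz B i r) /\
    is_ssyt (rhoQ B) (conj_part mu)
      (fun i => if 0 < i <= L then #|row B i| else 0).
Proof.
move=> hL hn hB.
set R := rhoN B.
have hR : R = rhoNk L B by rewrite /R /rhoN hB.
have [hszR [_ hchR]] : Pst B R L by rewrite hR; apply: rhoNk_P; lia.
have rowR0 r : L < r -> row R r = set0.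
  by move=> h; rewrite /row nth_default //; lia.
have hall r c : 1 < r -> cnt (row R r) c <= cnt (row R r.-1) c.
  move=> hr; case: (leqP r L) => h.
    by have := hchR r.-1 c; rewrite prednK; [apply; lia | lia].
  by rewrite rowR0 // cnt_set0.
pose f := fun r => #|row R r|.
have hdec r : 0 < r -> f r.+1 <= f r.
  by move=> hr; have := hall r.+1 0; rewrite !cnt0 /=; apply; lia.
have h0 r : L < r -> f r = 0 by move=> h; rewrite /f rowR0 // cards0.
have Nsz0 r : Nsz B 0 r = 0 by rewrite /Nsz; case: ifP => //; lia.
have NszZ i r : i < r -> Nsz B i r = 0 by move=> h; rewrite /Nsz; case: ifP => //; lia.
have NszL r : 0 < r <= L -> Nsz B L r = f r by move=> h; rewrite /Nsz h /f hR.
have hmono : forall i r, 0 < i <= L -> Nsz B i.-1 r <= Nsz B i r.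
  move=> [|k] r // hk; case: (eqVneq k 0) => [->|hk0]; first by rewrite Nsz0.
  rewrite /= /Nsz; case: ifP => h //; rewrite ifT; last by lia.
  have hk' : 0 < k < size B by lia.
  have [h1 _] := rhoNk_rel hk'.
  by rewrite -!cnt0; apply: h1; lia.
exists (mu_of f L).
split.
  split; last by apply: maj0.
  split; first exact: mu_partition.
  split.
    by rewrite size_mu /f; apply: leq_trans (max_card _) _; rewrite card_ord.
  by move=> r hr; rewrite conj_mu.
split; first exact: hmono.
have hQ : rhoQ B = [seq blk (fun i => Nsz B i r) L | r <- iota 1 L] by rewrite /rhoQ hB.
have nthQ r : nth [::] (rhoQ B) r = if r < L then blk (fun i => Nsz B i r.+1) L else [::].
  rewrite hQ; case: ltnP => h.
    by rewrite (nth_map 0) ?size_iota // nth_iota // add1n.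
  by rewrite nth_default // size_map size_iota.
have hinc r i : i < L -> Nsz B i r <= Nsz B i.+1 r by move=> h; apply: (hmono i.+1); lia.
have F6 v r : 0 < v <= L -> Nsz B v r.+2 <= Nsz B v.-1 r.+1.
  move=> hv; rewrite {1}/Nsz; case: ifP => h //.
  have hk : 0 < v.-1 < size B by lia.
  have [_ h2] := rhoNk_rel hk.
  rewrite /Nsz ifT; last by lia.
  rewrite -!cnt0; move: (h2 r.+1 0); rewrite prednK; [apply; lia | lia].
have cb r v : count (fun z => z <= v) (blk (fun i => Nsz B i r) L) = Nsz B (minn v L) r.
  by apply: count_blk; [move=> k; apply: hinc | exact: Nsz0].
split.
  move=> r; rewrite nthQ; case: ifP => h.
    rewrite size_blk; [|by move=> k; apply: hinc|exact: Nsz0].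
    by rewrite /= NszL ?conj_mu //; lia.
  by rewrite conj_mu // h0 //; lia.
split.
  by move=> r; rewrite nthQ; case: ifP => _ //; apply: sorted_blk.
split.
  move=> r c; rewrite (nthQ r.+1); case: ifP => h; last by [].
  rewrite nthQ ifT; last by lia.
  set y := blk _ L; set x := blk _ L => hc.
  set v := nth 0 y c.
  have hv : v \in y by apply: mem_nth.
  have /andP[hv1 hvL] := mem_blk hv.
  have c1 : c < count (fun z => z <= v) y by rewrite -nth_sorted_le // sorted_blk.
  rewrite cb (minn_idPl hvL) in c1.
  have c2 := F6 v r (introT andP (conj hv1 hvL)).
  have c3 : c < count (fun z => z <= v.-1) x.
    rewrite cb (_ : minn v.-1 L = v.-1); lia.
  have hcx : c < size x by apply: leq_trans c3 (count_size _ _).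
  have := @nth_sorted_le x c v.-1 (sorted_blk _ _) hcx; rewrite c3 => hle.
  by move: hle; rewrite -/x /=; lia.
move=> i.
rewrite hQ count_flatten -map_comp sumnE big_map.
have -> : iota 1 L = index_iota 1 L.+1 by rewrite /index_iota subSS subn0.
under eq_bigr => r _ do rewrite /= count_mem_blk.
case: ifP => hi; last by rewrite big1.
have S k : k <= L -> \sum_(1 <= r < L.+1) Nsz B k r = \sum_(1 <= r < k.+1) #|row B r|.
  move=> hk; case: (eqVneq k 0) => [->|hk0].
    by rewrite big1 ?big_geq // => r _; rewrite Nsz0.
  rewrite (big_cat_nat _ (n := k.+1)) //= ; try lia.
  rewrite [X in _ + X]big1_seq ?addn0; last first.
    by move=> r; rewrite mem_index_iota => hr; rewrite NszZ //; lia.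
  rewrite -rhoNk_partial; last by lia.
  by apply: eq_big_nat => r hr; rewrite /Nsz ifT //; lia.
have D : \sum_(1 <= r < L.+1) (Nsz B i r - Nsz B i.-1 r) + \sum_(1 <= r < L.+1) Nsz B i.-1 r
         = \sum_(1 <= r < L.+1) Nsz B i r.
  by rewrite -big_split; apply: eq_bigr => r _; rewrite /= subnK //; apply: hmono.
move: D; rewrite !S; try lia.
rewrite (big_nat_recr i) /=; last by lia.
by rewrite prednK; lia.
Qed.
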